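(* Let $\{z_n\}$ be generated by the process $\mathcal{S}(\kappa,\Phi)$ of Theorem 6 ($\kappa$ with $\sum_n\rho^{\kappa(n)}=\infty$ for all $0<\rho\le1$; $\Phi$ the non-modal count with respect to $K$-nearest neighbors, $K\ge2$). Let $Q_n=\{x\in X:\Phi(x,Z_n)>0\}$ and $Q=\limsup_n Q_n$ (points lying in infinitely many $Q_n$). If $X$ is separable and the set of $f$-boundary points has $\mu$-measure zero, then with probability one $\mu(Q)=0$.
   Context: $(X,d)$ metric space with probability measure $\mu$; $Y$ countable; $f:X\to Y$; $X_y=f^{-1}(y)$; $B_\epsilon(x)$ open ball; $\operatorname{supp}(\mu)=\{x:\mu(B_\epsilon(x))>0\ \forall\epsilon>0\}$. $b$ is an $f$-boundary point iff $\mu(B_\epsilon(b)\setminus X_{f(b)})>0$ for all $\epsilon>0$. $\operatorname{modefreq}_f(A)=\max_y|A\cap X_y|$. $V_S(x)=\emptyset$ if $x\in S$; otherwise $V_S(x)$ is a $K$-element subset of $S$ minimizing distance to $x$, chosen among such subsets to minimize $\operatorname{modefreq}_f$. $\Phi(x,S)=|V_S(x)|-\operatorname{modefreq}_f(V_S(x))$. Process $\mathcal{S}(\kappa,\Phi)$: $Z_0=\emptyset$; at step $n$ draw $\kappa(n)$ candidates i.i.d. from $\mu$, independent of the past; $z_n$ maximizes $\Phi(\cdot,Z_{n-1})$ over candidates (ties uniformly at random); $Z_n=\{z_1,\dots,z_n\}$. *)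

(* Defs.v *)
From HB Require Import structures.
From mathcomp Require Import all_boot all_order all_algebra.
From mathcomp Require Import all_classical all_reals all_analysis.
Unset Printing Implicit Defensive.
Import Order.TTheory GRing.Theory Num.Theory.
Local Open Scope classical_set_scope.
Local Open Scope ring_scope.

Section Defs.
Context {R : realType} {X : pointedType} {Y : countType}.

Definition is_metric (d : X -> X -> R) : Prop :=
  [/\ forall x y, 0 <= d x y,
      forall x y, d x y = 0 <-> x = y,
      forall x y, d x y = d y x &
      forall x y z, d x z <= d x y + d y z].

Definition oball (d : X -> X -> R) (x : X) (eps : R) : set X :=
  [set y | d x y < eps].

Definition metric_open (d : X -> X -> R) : set (set X) :=
  [set O | forall x, O x -> exists2 eps : R, 0 < eps & oball d x eps `<=` O].

Definition borelX (d : X -> X -> R) := g_sigma_algebraType (metric_open d).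

Definition separable (d : X -> X -> R) : Prop :=
  exists D : set X, countable D /\
    forall x (eps : R), 0 < eps -> exists2 q, D q & d x q < eps.

Definition f_boundary (d : X -> X -> R) (mu : set (borelX d) -> \bar R)
  (f : X -> Y) (b : X) : Prop :=
  forall eps : R, 0 < eps ->
    (0 < mu (oball d b eps `\` (f @^-1` [set f b])))%E.

(* modefreq_f(A) = max_y |A /\ X_y|, A given as a duplicate-free list *)
Definition modefreq (f : X -> Y) (A : seq X) : nat :=
  \max_(y <- map f A) count (fun a => f a == y) A.

Definition knn_set (d : X -> X -> R) (K : nat) (S : seq X) (x : X)
  (V : seq X) : Prop :=
  [/\ uniq V, {subset V <= S}, size V = minn K (size (undup S)) &
      forall v w, v \in V -> w \in S -> w \notin V -> d x v <= d x w].

Definition VS (d : X -> X -> R) (f : X -> Y) (K : nat) (S : seq X) (x : X)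
  : seq X :=
  if x \in S then [::]
  else xget [::] [set V | knn_set d K S x V /\
                    forall W, knn_set d K S x W -> (modefreq f V <= modefreq f W)%N].

Definition Phi (d : X -> X -> R) (f : X -> Y) (K : nat) (x : X) (S : seq X)
  : nat := (size (VS d f K S x) - modefreq f (VS d f K S x))%N.

(* one step of the process: among the candidates cs, keep the maximizers of
   Phi(.,Z) and pick one of them using u (uniform in [0,1]) *)
Definition select (d : X -> X -> R) (f : X -> Y) (K : nat) (Z : seq X)
  (cs : seq X) (u : R) : X :=
  let m := \max_(c <- cs) Phi d f K c Z in
  let M := [seq c <- cs | Phi d f K c Z == m] in
  nth point M (Num.truncn (u * (size M)%:R) %% size M).

(* Z_n as the list [z_1; ...; z_n]; step n uses candidates cand n 0 .. cand n (kappa n - 1)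
   and tie-breaker U n *)
Fixpoint Zseq (d : X -> X -> R) (f : X -> Y) (K : nat) (kappa : nat -> nat)
  {T : Type} (cand : nat -> nat -> T -> X) (U : nat -> T -> R) (n : nat) (w : T)
  : seq X :=
  match n with
  | 0 => [::]
  | n'.+1 => let Z := Zseq d f K kappa cand U n' w in
             rcons Z (select d f K Z [seq cand n'.+1 i w | i <- iota 0 (kappa n'.+1)]
                        (U n'.+1 w))
  end.

End Defs.

Definition mutually_independent {dO} {O : measurableType dO} {R : realType}
  (P : probability O R) {J : eqType} (valid : J -> Prop) (gen : J -> set (set O))
  : Prop :=
  forall (F : seq J) (E : J -> set O), uniq F ->
    (forall j, j \in F -> valid j /\ gen j (E j)) ->
    P (\big[setI/setT]_(j <- F) E j) = (\prod_(j <- F) P (E j))%E.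

(* Main.v *)
Require Import Defs.
From HB Require Import structures.
From mathcomp Require Import all_boot all_order all_algebra.
From mathcomp Require Import all_classical all_reals all_analysis.
From mathcomp Require Import lra.
Import Order.TTheory GRing.Theory Num.Theory.
Local Open Scope classical_set_scope.
Local Open Scope ring_scope.

Section Det.
Context {R : realType} {X : pointedType} {Y : countType}.
Variables (d : X -> X -> R) (f : X -> Y) (K : nat).

Lemma Phi_mem x S : x \in S -> Phi d f K x S = 0%N.
Proof. by move=> xS; rewrite /Phi /VS xS. Qed.

Lemma modefreq_ge (V : seq X) y : (forall v, v \in V -> f v = y) -> (size V <= modefreq f V)%N.
Proof.
case: V => [//|v0 V] H.
rewrite /modefreq.
apply: (leq_trans _ (@leq_bigmax_seq _ (map f (v0 :: V)) xpredT (fun y => count (fun a => f a == y) (v0 :: V)) (f v0) _ _)); last first.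
- by [].
- by rewrite map_f // mem_head.
rewrite (eq_in_count (a2 := xpredT)) ?count_predT //.
move=> a aV /=; by rewrite (H a aV) (H v0 (mem_head _ _)) eqxx.
Qed.

Lemma Phi_knn0 x S (dl : R) L : x \notin S -> uniq L -> size L = K ->
  {subset L <= S} -> (forall l, l \in L -> d x l < dl) ->
  (forall z, z \in S -> d x z < dl -> f z = f x) -> Phi d f K x S = 0%N.
Proof.
move=> xS uL sL LS Ld Sf.
rewrite /Phi /VS (negbTE xS).
set P := [set V | _].
have [[V PV]|nP] := pselect (exists V, P V); last first.
  by rewrite xgetPN //= => V PV; apply: nP; exists V.
have := xgetPex [::] (ex_intro _ V PV).
move: (xget _ _) => W [[uW WS sW Wd] _].
apply/eqP; rewrite subn_eq0; apply: (@modefreq_ge _ (f x)) => v vW.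
have KS : (K <= size (undup S))%N.
  rewrite -sL; apply: uniq_leq_size => // l lL; rewrite mem_undup; exact: LS.
have sWK : size W = K by rewrite sW; apply/minn_idPl.
apply: Sf; first exact: WS.
have [LW|] := boolP (all (fun l => l \in W) L).
  have [_ eq] : (size L = size W) * (L =i W).
    by apply: uniq_min_size => //; [move=> l lL; exact: (allP LW) | rewrite sWK sL].
  by apply: Ld; rewrite eq.
case/allPn => l lL lW.
exact: (le_lt_trans (Wd v l vW (LS l lL) lW) (Ld l lL)).
Qed.
End Det.
Lemma has_bigmax {I : eqType} (F : I -> nat) (cs : seq I) : cs != [::] ->
  has (fun c => F c == \max_(c' <- cs) F c') cs.
Proof.
elim: cs => [//|c cs IH] _; rewrite big_cons /=.
case: (eqVneq cs [::]) => [->|csn]; first by rewrite big_nil maxn0 eqxx.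
have := IH csn; case: (leqP (\max_(c' <- cs) F c') (F c)) => h H.
  by rewrite eqxx.
by rewrite H orbT.
Qed.

Section Z.
Context {R : realType} {X : pointedType} {Y : countType}.
Variables (d : X -> X -> R) (f : X -> Y) (K : nat) (kappa : nat -> nat).

Lemma select_mem Z (u : R) cs : cs != [::] -> select d f K Z cs u \in cs.
Proof.
move=> csn; rewrite /select.
set M := seq.filter _ cs.
have Mn : (0 < size M)%N.
  by rewrite lt0n size_eq0 -has_filter; apply: has_bigmax.
have : nth point M (Num.truncn (u * (size M)%:R) %% size M) \in M.
  by apply: mem_nth; rewrite ltn_mod.
by rewrite mem_filter => /andP[].
Qed.

Variables (T : Type) (cand : nat -> nat -> T -> X) (U : nat -> T -> R).
Hypothesis kpos : forall n, (1 <= n)%N -> (1 <= kappa n)%N.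

Lemma Zseq_sub m n w : (m <= n)%N -> {subset Zseq d f K kappa cand U m w <= Zseq d f K kappa cand U n w}.
Proof.
elim: n => [|n IH]; first by rewrite leqn0 => /eqP ->.
rewrite leq_eqVlt => /orP[/eqP -> //|]; rewrite ltnS => /IH H z zm.
by rewrite /= mem_rcons inE (H z zm) orbT.
Qed.

Lemma Zseq_last n w : (1 <= n)%N -> exists i, (i < kappa n)%N /\
  cand n i w \in Zseq d f K kappa cand U n w.
Proof.
case: n => [//|n] _ /=.
set cs := map _ _.
have csn : cs != [::] by rewrite /cs -size_eq0 size_map size_iota -lt0n; apply: kpos.
have := select_mem (Zseq d f K kappa cand U n w) (U n.+1 w) cs csn.
move=> /mapP[i]; rewrite mem_iota add0n => /andP[_ ik] e.
by exists i; split => //; rewrite -e mem_rcons mem_head.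
Qed.

Lemma Zseq_cand n w z : z \in Zseq d f K kappa cand U n w ->
  exists m i, [/\ (1 <= m)%N, (i < kappa m)%N & z = cand m i w].
Proof.
elim: n => [//|n IH] /=; rewrite mem_rcons inE => /orP[/eqP ->|]; last exact: IH.
set cs := map _ _.
have csn : cs != [::] by rewrite /cs -size_eq0 size_map size_iota -lt0n; apply: kpos.
have := select_mem (Zseq d f K kappa cand U n w) (U n.+1 w) cs csn.
move=> /mapP[i]; rewrite mem_iota add0n => /andP[_ ik] e.
by exists n.+1, i.
Qed.
End Z.
Lemma bigI_mem {O : Type} {I : eqType} (s : seq I) (E : I -> set O) w :
  (\big[setI/setT]_(j <- s) E j) w <-> forall j, j \in s -> E j w.
Proof.
elim: s => [|j s IH]; first by rewrite big_nil; split.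
rewrite big_cons; split.
  move=> [Ej /IH H] k; rewrite inE => /orP[/eqP ->//|]; exact: H.
move=> H; split; first by apply: H; rewrite mem_head.
by apply/IH => k ks; apply: H; rewrite inE ks orbT.
Qed.

Lemma prodEFin {R : realType} {I : Type} (s : seq I) (F : I -> R) :
  (\prod_(j <- s) (F j)%:E)%E = (\prod_(j <- s) F j)%:E.
Proof.
elim: s => [|j s IH]; first by rewrite !big_nil.
by rewrite !big_cons IH EFinM.
Qed.

Lemma prod_bound {R : realType} (s : seq R) : (forall p, p \in s -> 0 <= p <= 1) ->
  (\prod_(p <- s) (1 - p)) * (1 + \sum_(p <- s) p) <= 1.
Proof.
elim: s => [|p s IH] H; first by rewrite !big_nil mul1r addr0.
rewrite !big_cons.
have /andP[p0 p1] := H p (mem_head _ _).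
have H' : forall q, q \in s -> 0 <= q <= 1 by move=> q qs; apply: H; rewrite inE qs orbT.
have IH' := IH H'.
have P0 : 0 <= \prod_(q <- s) (1 - q).
  by rewrite big_seq; apply: prodr_ge0 => q qs; have /andP[_] := H' q qs; rewrite subr_ge0.
have S0 : 0 <= \sum_(q <- s) q.
  by rewrite big_seq; apply: sumr_ge0 => q qs; have /andP[] := H' q qs.
set Pi := \prod_(q <- s) (1 - q) in IH' P0 *.
set S := \sum_(q <- s) q in IH' S0 *.
have h1 : 0 <= p * Pi * S by rewrite !mulr_ge0.
have h2 : 0 <= p * p * Pi by rewrite !mulr_ge0.
nra.
Qed.

Lemma unbounded {R : realType} (u : nat -> R) : (forall n, 0 <= u n) ->
  (\sum_(0 <= n <oo) (u n)%:E)%E = +oo%E ->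
  forall c, exists M, c < \sum_(n <- iota 1 M) u n.
Proof.
move=> u0 H c.
have [M HM] : exists M, c + u 0%N < \sum_(0 <= n < M) u n.
  apply/not_existsP => Hn.
  have : (\sum_(0 <= n <oo) (u n)%:E <= (c + u 0%N)%:E)%E.
    apply: lime_le; first by apply: is_cvg_nneseries => n _ _; rewrite lee_fin.
    apply: nearW => M; rewrite sumEFin lee_fin; rewrite leNgt; apply/negP => h.
    by apply: (Hn M).
  by rewrite H leye_eq.
exists M.
have e : \sum_(0 <= n < M.+1) u n = u 0%N + \sum_(n <- iota 1 M) u n.
  by rewrite /index_iota subn0 /= big_cons.
have e2 : \sum_(0 <= n < M.+1) u n = \sum_(0 <= n < M) u n + u M by rewrite big_nat_recr.
have := u0 M; lra.
Qed.

Section Prob.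
Context {R : realType} {dT : measure_display} {T : measurableType dT}
  {dO : measure_display} {O : measurableType dO}.
Variables (P : probability O R) (mu : probability T R) (kappa : nat -> nat)
  (cand : nat -> nat -> O -> T).
Hypothesis candm : forall n i, (1 <= n)%N -> (i < kappa n)%N ->
  measurable_fun setT (cand n i) /\
  forall A, measurable A -> P (cand n i @^-1` A) = mu A.
Hypothesis indep : forall (F : seq (nat * nat)) (E : nat * nat -> set O),
  uniq F -> (forall j, j \in F -> [/\ (1 <= j.1)%N, (j.2 < kappa j.1)%N &
     exists2 A, measurable A & E j = cand j.1 j.2 @^-1` A]) ->
  P (\big[setI/setT]_(j <- F) E j) = (\prod_(j <- F) P (E j))%E.
Variables (B : set T) (rho : R).
Hypotheses (mB : measurable B) (muB : mu B = rho%:E).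

Definition Aev n := \big[setI/setT]_(i <- iota 0 (kappa n)) (cand n i @^-1` B).
Definition IA Ts := \big[setI/setT]_(n <- Ts) Aev n.
Definition NA L := \big[setI/setT]_(n <- L) ~` Aev n.

Lemma pre_meas n i : (1 <= n)%N -> (i < kappa n)%N -> measurable (cand n i @^-1` B).
Proof.
move=> n1 ik; have [mf _] := candm _ _ n1 ik.
by have := mf measurableT B mB; rewrite setTI.
Qed.

Lemma Aev_meas n : (1 <= n)%N -> measurable (Aev n).
Proof.
move=> n1; rewrite /Aev big_seq; apply: bigsetI_measurable => i.
rewrite mem_iota add0n => /andP[_ ik]; exact: pre_meas.
Qed.

Lemma IA_meas Ts : all (fun n => 0 < n)%N Ts -> measurable (IA Ts).
Proof.
move=> /allP H; rewrite /IA big_seq; apply: bigsetI_measurable => n nT.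
exact/Aev_meas/H.
Qed.

Lemma NA_meas Ts : all (fun n => 0 < n)%N Ts -> measurable (NA Ts).
Proof.
move=> /allP H; rewrite /NA big_seq; apply: bigsetI_measurable => n nT.
exact/measurableC/Aev_meas/H.
Qed.

Definition pairs Ts := flatten [seq [seq (n, i) | i <- iota 0 (kappa n)] | n <- Ts].

Lemma mem_pairs Ts n i : ((n, i) \in pairs Ts) = (n \in Ts) && (i < kappa n)%N.
Proof.
elim: Ts => [//|m Ts IH].
rewrite /pairs /= mem_cat -/(pairs Ts) IH inE.
have -> : ((n, i) \in [seq (m, k) | k <- iota 0 (kappa m)]) = (n == m) && (i < kappa m)%N.
  apply/mapP/andP => [[k kI [-> ->]]|[/eqP -> ik]].
    by rewrite eqxx; move: kI; rewrite mem_iota add0n.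
  by exists i => //; rewrite mem_iota add0n.
by case: (eqVneq n m) => [->|nm] //=; case: (i < kappa m)%N; rewrite ?andbT ?andbF.
Qed.

Lemma uniq_pairs Ts : uniq Ts -> uniq (pairs Ts).
Proof.
elim: Ts => [//|m Ts IH] /= /andP[mT uT].
rewrite /pairs /= cat_uniq -/(pairs Ts) IH // andbT.
rewrite map_inj_uniq ?iota_uniq; last by move=> a b [].
apply/hasPn => [[n i]]; rewrite mem_pairs => /andP[nT _].
by apply/mapP => [[k _ [e _]]]; move: mT; rewrite -e nT.
Qed.

Lemma prodIA Ts : uniq Ts -> all (fun n => 0 < n)%N Ts ->
  P (IA Ts) = (\prod_(n <- Ts) rho ^+ kappa n)%:E.
Proof.
move=> uT /allP Tpos.
have -> : IA Ts = \big[setI/setT]_(j <- pairs Ts) (cand j.1 j.2 @^-1` B).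
  apply/seteqP; split => w.
    move=> /bigI_mem H; apply/bigI_mem => -[n i]; rewrite mem_pairs => /andP[nT ik].
    by have /bigI_mem := H n nT; apply; rewrite mem_iota add0n.
  move=> /bigI_mem H; apply/bigI_mem => n nT; apply/bigI_mem => i.
  by rewrite mem_iota add0n => /andP[_ ik]; apply: (H (n, i)); rewrite mem_pairs nT.
rewrite indep; first last.
- move=> [n i]; rewrite mem_pairs => /andP[nT ik]; split => //; first exact: Tpos.
  by exists B.
- exact: uniq_pairs.
rewrite (eq_big_seq (fun _ => rho%:E)); last first.
  move=> [n i] /=; rewrite mem_pairs => /andP[nT ik].
  by have [_ ->] := candm _ _ (Tpos n nT) ik.
rewrite prodEFin /pairs big_flatten /= big_map.
congr (_%:E); apply: eq_bigr => n _.
rewrite big_map; have := prodr_const_nat 0 (kappa n) rho; rewrite /index_iota !subn0; exact.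
Qed.

Lemma prodAC L Ts : uniq (L ++ Ts) -> all (fun n => 0 < n)%N (L ++ Ts) ->
  P (IA Ts `&` NA L) =
  ((\prod_(n <- Ts) rho ^+ kappa n) * \prod_(n <- L) (1 - rho ^+ kappa n))%:E.
Proof.
elim: L Ts => [|m L IH] Ts.
  by move=> uT aT; rewrite /NA !big_nil setIT prodIA // mulr1.
move=> u a.
have u1 : uniq (L ++ Ts) by move: u; rewrite cat_cons /= => /andP[].
have a1 : all (fun n => 0 < n)%N (L ++ Ts) by move: a; rewrite cat_cons /= => /andP[].
have u2 : uniq (L ++ m :: Ts).
  by move: u; rewrite -cat1s -!catA uniq_catCA.
have m0 : (0 < m)%N by move: a => /= /andP[].
have a2 : all (fun n => 0 < n)%N (L ++ m :: Ts).
  by move: a1; rewrite !all_cat /= m0 => /andP[-> ->].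
have -> : IA Ts `&` NA (m :: L) = (IA Ts `&` NA L) `\` Aev m.
  rewrite /NA big_cons; apply/seteqP; split => w.
    by move=> [x1 [x2 x3]]; split; [split|].
  by move=> [[x1 x3] x2]; split; [|split].
rewrite measureD; first last.
- by rewrite (le_lt_trans (probability_le1 _ _)) ?ltry //; apply: measurableI;
    [apply: IA_meas; move: a1; rewrite all_cat => /andP[] | apply: NA_meas; move: a1; rewrite all_cat => /andP[]].
- exact: Aev_meas.
- by apply: measurableI;
    [apply: IA_meas; move: a1; rewrite all_cat => /andP[] | apply: NA_meas; move: a1; rewrite all_cat => /andP[]].
have -> : IA Ts `&` NA L `&` Aev m = IA (m :: Ts) `&` NA L.
  rewrite /IA big_cons; apply/seteqP; split => w.
    by move=> [[x1 x3] x2]; split; [split|].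
  by move=> [[x1 x2] x3]; split; [split|].
rewrite -[LHS]/(P (IA Ts `&` NA L) - P (IA (m :: Ts) `&` NA L))%E.
rewrite (IH Ts u1 a1) (IH (m :: Ts) u2 a2) -EFinB big_cons big_cons; congr (_%:E).
by rewrite mulrBl mul1r mulrBr !mulrA [_ * rho ^+ _]mulrC.
Qed.

Lemma hit_negl : (0 < rho) ->
  (\sum_(0 <= n <oo) (rho ^+ kappa n)%:E)%E = +oo%E ->
  P.-negligible [set w | ~ exists2 n, (1 <= n)%N &
     forall i, (i < kappa n)%N -> B (cand n i w)].
Proof.
move=> rho0 Hdiv.
have rho1 : rho <= 1.
  by rewrite -lee_fin -muB probability_le1.
have pos M : all (fun n => 0 < n)%N (iota 1 M).
  by apply/allP => n; rewrite mem_iota => /andP[].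
exists (\bigcap_M NA (iota 1 M)); split.
- by apply: bigcapT_measurable => M; apply: NA_meas.
- set x := P _.
  have xM M : (x <= ((\prod_(n <- iota 1 M) (1 - rho ^+ kappa n)))%:E)%E.
    have := prodAC (iota 1 M) [::].
    rewrite cats0 iota_uniq pos /IA !big_nil setTI mul1r => <- //.
    by apply: le_measure; rewrite ?inE; [apply: bigcapT_measurable => M'; apply: NA_meas
      | apply: NA_meas | by move=> w; apply].
  have x0 : (0 <= x)%E by apply: measure_ge0.
  have xf : x \is a fin_num.
    by rewrite ge0_fin_numE // (le_lt_trans (xM 0%N)) ?ltry.
  rewrite -(fineK xf); congr (_%:E); set r := fine x.
  have r0 : 0 <= r by rewrite /r fine_ge0.
  apply/eqP; rewrite eq_le r0 andbT; apply/negP => /negP; rewrite -ltNge => rpos.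
  have [M HM] := @unbounded _ (fun n => rho ^+ kappa n)
     (fun n => exprn_ge0 _ (ltW rho0)) Hdiv (r^-1).
  have := xM M; rewrite -(fineK xf) lee_fin -/r => hr.
  have hb := @prod_bound _ [seq rho ^+ kappa n | n <- iota 1 M].
  rewrite big_map [X in _ * (1 + X)]big_map in hb.
  have Sge : 0 <= \sum_(n <- iota 1 M) rho ^+ kappa n.
    by apply: sumr_ge0 => n _; apply: exprn_ge0; exact: ltW.
  have hyp : forall p, p \in [seq rho ^+ kappa n | n <- iota 1 M] -> 0 <= p <= 1.
    move=> p /mapP[n _ ->]; rewrite exprn_ge0 ?exprn_ile1 //; exact: ltW.
  move: (hb hyp).
  set Pi := \prod_(n <- iota 1 M) _ in hr *.
  set S := \sum_(n <- iota 1 M) _ in HM Sge *.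
  move=> h.
  have : r * (1 + S) <= 1 by apply: le_trans h; rewrite ler_wpM2r // addr_ge0.
  have : 1 < r * (1 + S).
    rewrite -[X in X < _](mulfV (lt0r_neq0 rpos)) ltr_pM2l //.
    by apply: (lt_le_trans HM); lra.
  lra.
- move=> w /= Hw M _ /=; apply/bigI_mem => n; rewrite mem_iota => /andP[n1 _] An.
  apply: Hw; exists n => // i ik.
  by move/bigI_mem: An => /(_ i); rewrite mem_iota add0n ik; apply.
Qed.

End Prob.
Lemma arch2 {R : realType} (r : R) : 0 < r -> exists k : nat, 2 * (k.+1%:R)^-1 < r.
Proof.
move=> r0; set x := 2 / r.
have x0 : 0 <= x by rewrite /x divr_ge0 // ltW.
have := truncn_lt_nat (Num.truncn x).+1 x0; rewrite ltnSn => /esym h.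
exists (Num.truncn x); set k := (Num.truncn x).+1%:R in h *.
have k0 : 0 < k by rewrite /k ltr0n.
rewrite ltr_pdivrMr //.
by move: h; rewrite /x ltr_pdivrMr // mulrC.
Qed.

Section Ball.
Context {R : realType} {X : pointedType}.
Variables (d : X -> X -> R) (e : nat -> X).
Hypothesis dm : is_metric d.
Hypothesis dense : forall x (eps : R), 0 < eps -> exists j, d x (e j) < eps.

Definition qball (j k : nat) := oball d (e j) (k.+1%:R^-1).

Lemma ball_in x r : 0 < r -> exists j k, qball j k x /\ qball j k `<=` oball d x r.
Proof.
move=> r0; have [k hk] := arch2 _ r0.
have kp : 0 < (k.+1%:R : R)^-1 by rewrite invr_gt0 ltr0n.
have [j hj] := dense x _ kp.
case: dm => _ _ dsym dtri.
exists j, k; split; first by rewrite /qball /oball /= dsym.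
move=> y; rewrite /qball /oball /= => hy.
have e2 : 2 / (k.+1%:R : R) = k.+1%:R^-1 + k.+1%:R^-1 by rewrite mulr_natl mulr2n.
apply: (le_lt_trans (dtri x (e j) y)); apply: lt_trans hk; rewrite e2; exact: ltrD.
Qed.

Lemma ball_open j k : metric_open d (qball j k).
Proof.
case: dm => _ _ dsym dtri.
move=> y; rewrite /qball /oball /= => hy.
exists (k.+1%:R^-1 - d (e j) y); first by rewrite subr_gt0.
move=> z; rewrite /oball /= => hz.
set t := (k.+1%:R^-1 : R) in hz *.
apply: (le_lt_trans (dtri (e j) y z)); lra.
Qed.

Lemma ball_delta j k x : qball j k x -> exists2 dl, 0 < dl & oball d x dl `<=` qball j k.
Proof.
case: dm => _ _ dsym dtri.
rewrite /qball /oball /= => hx.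
exists (k.+1%:R^-1 - d (e j) x); first by rewrite subr_gt0.
move=> z; rewrite /oball /= => hz.
set t := (k.+1%:R^-1 : R) in hz *.
apply: (le_lt_trans (dtri (e j) x z)); lra.
Qed.
End Ball.
Section Det2.
Context {R : realType} {X : pointedType} {Y : countType}.
Variables (d : X -> X -> R) (f : X -> Y) (K : nat) (kappa : nat -> nat).
Variables (T : Type) (cand : nat -> nat -> T -> X) (U : nat -> T -> R) (w : T).
Variables (e : nat -> X) (N : set X).
Hypothesis dm : is_metric d.
Hypothesis dense : forall x (eps : R), 0 < eps -> exists j, d x (e j) < eps.
Hypothesis kpos : forall n, (1 <= n)%N -> (1 <= kappa n)%N.
Hypothesis Aw : forall n i, (1 <= n)%N -> (i < kappa n)%N -> ~ N (cand n i w).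
Hypothesis Bw : forall j k, ~ (qball d e j k `<=` N) ->
  exists2 n, (1 <= n)%N & forall i, (i < kappa n)%N -> qball d e j k (cand n i w).

Let Z n := Zseq d f K kappa cand U n w.

Lemma Z_notN n z : z \in Z n -> ~ N z.
Proof. by move=> /(Zseq_cand d f K kappa _ cand U kpos) [m [i [m1 ik ->]]]; apply: Aw. Qed.

Lemma hit x r : ~ N x -> 0 < r -> exists n z, z \in Z n /\ d x z < r.
Proof.
move=> Nx r0; have [j [k [bx bs]]] := ball_in d e dm dense x r r0.
have [|n n1 Hn] := Bw j k; first by move=> /(_ x bx).
have [i [ik iZ]] := Zseq_last d f K kappa _ cand U kpos n w n1.
by exists n, (cand n i w); split => //; apply: bs; apply: Hn.
Qed.

Lemma det x : ~ N x ->
  (exists2 eps, 0 < eps & forall j k, qball d e j k `<=` oball d x eps ->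
      qball d e j k `\` f @^-1` [set f x] `<=` N) ->
  ~ (forall N0, exists2 n, (N0 <= n)%N & (0 < Phi d f K x (Z n))%N).
Proof.
move=> Nx [eps eps0 Heps] HQ.
case: (dm) => dpos deq dsym dtri.
have [n0 Hn0] : exists n0, forall m, (n0 <= m)%N -> Phi d f K x (Z m) = 0%N;
  last by have [m m0] := HQ n0; rewrite Hn0.
have [xZ|xZ] := pselect (exists n, x \in Z n).
  case: xZ => n xn; exists n => m nm; apply: Phi_mem.
  exact: (Zseq_sub d f K kappa _ cand U _ _ w nm).
have [j [k [bx bs]]] := ball_in d e dm dense x eps eps0.
have [dl dl0 dlb] := ball_delta d e dm j k x bx.
have lab : forall m z, z \in Z m -> d x z < dl -> f z = f x.
  move=> m z zm dz; case: (eqVneq (f z) (f x)) => // fz; exfalso.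
  apply: (Z_notN m z zm); apply: (Heps j k bs); split; first exact: dlb.
  by rewrite /= => /eqP; rewrite (negbTE fz).
have ind : forall c, exists L n (rh : R), [/\ 0 < rh, rh <= dl, uniq L, size L = c &
    {subset L <= Z n} /\ forall l, l \in L -> rh <= d x l < dl].
  elim => [|c [L [n [rh [rh0 rhd uL sL [LZ Ld]]]]]].
    by exists [::], 0%N, dl; split.
  have [m [z [zm dz]]] := hit x rh Nx rh0.
  have zx : z != x by apply/eqP => zx; apply: xZ; exists m; rewrite -zx.
  have dz0 : 0 < d x z.
    rewrite lt0r dpos andbT; apply/eqP => /deq ezx.
    by move/eqP: zx; apply; rewrite ezx.
  exists (z :: L), (maxn n m), (d x z); split => //.
  - by apply: ltW; apply: (lt_le_trans dz).
  - rewrite /= uL andbT; apply/negP => zL.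
    by have /andP[h _] := Ld z zL; move: (lt_le_trans dz h); rewrite ltxx.
  - by rewrite /= sL.
  split.
    move=> l; rewrite inE => /orP[/eqP ->|lL].
      exact: (Zseq_sub d f K kappa _ cand U _ _ w (leq_maxr n m)).
    exact: (Zseq_sub d f K kappa _ cand U _ _ w (leq_maxl n m)) (LZ l lL).
  move=> l; rewrite inE => /orP[/eqP ->|lL].
    by rewrite lexx /=; apply: (lt_le_trans dz).
  have /andP[h1 h2] := Ld l lL; rewrite h2 andbT.
  exact: ltW (lt_le_trans dz h1).
have [L [n [rh [_ _ uL sL [LZ Ld]]]]] := ind K.
exists n => m nm.
apply: (Phi_knn0 d f K x _ dl L) => //.
- by apply/negP => xm; apply: xZ; exists m.
- by move=> l lL; apply: (Zseq_sub d f K kappa _ cand U _ _ w nm); apply: LZ.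
- by move=> l lL; have /andP[] := Ld l lL.
- by move=> z zm dz; apply: (lab m).
Qed.
End Det2.

Lemma oball_open {R : realType} {X : pointedType} (d : X -> X -> R) x r :
  is_metric d -> metric_open d (oball d x r).
Proof.
case=> _ _ dsym dtri y; rewrite /oball /= => hy.
exists (r - d x y); first by rewrite subr_gt0.
move=> z; rewrite /oball /= => hz.
apply: (le_lt_trans (dtri x y z)); lra.
Qed.

Theorem mainTheorem10 (R : realType) (X : pointedType) (Y : countType)
  (d : X -> X -> R) (mu : probability (borelX d) R) (f : X -> Y)
  (K : nat) (kappa : nat -> nat)
  (dO : measure_display) (O : measurableType dO) (P : probability O R)
  (cand : nat -> nat -> O -> borelX d) (U : nat -> O -> R) :
  is_metric d ->
  (forall y : Y, measurable (f @^-1` [set y] : set (borelX d))) ->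
  (2 <= K)%N ->
  (forall n, (1 <= n)%N -> (1 <= kappa n)%N) ->
  (forall rho : R, 0 < rho <= 1 ->
     (\sum_(0 <= n <oo) (rho ^+ kappa n)%:E)%E = +oo%E) ->
  (* candidates: measurable, with law mu *)
  (forall n i, (1 <= n)%N -> (i < kappa n)%N ->
     measurable_fun setT (cand n i) /\
     forall A : set (borelX d), measurable A -> P (cand n i @^-1` A) = mu A) ->
  (* tie-breakers: measurable, uniform on [0,1] *)
  (forall n, (1 <= n)%N ->
     measurable_fun setT (U n) /\
     forall t : R, 0 <= t <= 1 -> P [set w | 0 <= U n w <= t] = t%:E) ->
  (* all candidates and tie-breakers are mutually independent *)
  mutually_independent P
    (fun j : (nat * nat + nat)%type => match j with
       | inl (n, i) => (1 <= n)%N /\ (i < kappa n)%N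
       | inr n => (1 <= n)%N end)
    (fun j => match j with
       | inl (n, i) => [set cand n i @^-1` A | A in [set A : set (borelX d) | measurable A]]
       | inr n => [set U n @^-1` A | A in [set A : set R | measurable A]] end) ->
  separable d ->
  mu.-negligible (f_boundary d mu f) ->
  {ae P, forall w,
     mu.-negligible
       [set x : borelX d | forall N, exists2 n, (N <= n)%N &
          (0 < Phi d f K x (Zseq d f K kappa cand U n w))%N]}.
Proof.
move=> dm fm K2 kpos Hdiv Hcand _ Hind [D [Dc Dd]] Hbnd.
have [e eS] : exists e : nat -> X, set_surj [set: nat] D e by apply/pcard_surjP.
have dense : forall x (eps : R), 0 < eps -> exists j, d x (e j) < eps.
  move=> x eps eps0; have [q Dq dq] := Dd x eps eps0.
  by have [j _ ej] := eS q Dq; exists j; rewrite ej.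
have omeas : forall x r, measurable (oball d x r : set (borelX d)).
  by move=> x r; apply: sub_sigma_algebra; exact: oball_open.
pose Sset (t : nat * nat * option Y) : set (borelX d) :=
  match t with
  | (j, k, None) => qball d e j k
  | (j, k, Some y) => qball d e j k `\` f @^-1` [set y]
  end.
have Smeas : forall t, measurable (Sset t).
  move=> [[j k] [y|]] /=; last exact: omeas.
  by apply: measurableD; [exact: omeas | exact: fm].
pose Nn (n : nat) : set (borelX d) :=
  match unpickle n with
  | Some t => [set x | Sset t x /\ mu (Sset t) = 0%E]
  | None => set0 end.
pose Nset := \bigcup_n Nn n.
have Nneg : mu.-negligible Nset.
  apply: negligible_bigcup => n; rewrite /Nn.
  case: (unpickle n) => [t|]; last exact: negligible_set0.
  have [h|h] := pselect (mu (Sset t) = 0%E).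
    by apply: (negligibleS (A := Sset t)); [move=> x [] | exact/negligibleP].
  by apply: (negligibleS (A := set0)); [move=> x [] | exact: negligible_set0].
have NS : forall t, mu (Sset t) = 0%E -> Sset t `<=` Nset.
  move=> t h x Sx; exists (pickle t) => //; rewrite /Nn pickleK; by split.
have [N' [mN' muN' NN']] := Nneg.
have indep : forall (F : seq (nat * nat)) (E : nat * nat -> set O),
  uniq F -> (forall j, j \in F -> [/\ (1 <= j.1)%N, (j.2 < kappa j.1)%N &
     exists2 A, measurable A & E j = cand j.1 j.2 @^-1` A]) ->
  P (\big[setI/setT]_(j <- F) E j) = (\prod_(j <- F) P (E j))%E.
  move=> F E uF HF.
  have := Hind (map inl F) (fun j => match j with inl p => E p | inr _ => setT end).
  rewrite !big_map; apply; first by rewrite map_inj_uniq // => a b [].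
  move=> j /mapP[[n i] nF ->] /=; have [h1 h2 [A mA EA]] := HF _ nF; split => //.
  by exists A => //; rewrite EA.
pose BadA := \bigcup_n \bigcup_i [set w | [/\ (1 <= n)%N, (i < kappa n)%N & N' (cand n i w)]].
have BadAneg : P.-negligible BadA.
  apply: negligible_bigcup => n; apply: negligible_bigcup => i.
  have [[n1 ik]|h] := pselect ((1 <= n)%N /\ (i < kappa n)%N); last first.
    apply: (negligibleS (A := set0)); last exact: negligible_set0.
    by move=> w [n1 ik _]; apply: h.
  have [mc lc] := Hcand n i n1 ik.
  apply: (negligibleS (A := cand n i @^-1` N')); first by move=> w [].
  apply/negligibleP; last exact: etrans (lc _ mN') muN'.
  by have := mc measurableT N' mN'; rewrite setTI.
pose BadB := \bigcup_j \bigcup_k [set w | (0 < mu (qball d e j k))%E /\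
  ~ exists2 n, (1 <= n)%N & forall i, (i < kappa n)%N -> qball d e j k (cand n i w)].
have BadBneg : P.-negligible BadB.
  apply: negligible_bigcup => j; apply: negligible_bigcup => k.
  have [mpos|h] := pselect (0 < mu (qball d e j k))%E; last first.
    by apply: (negligibleS (A := set0)); [move=> w [] | exact: negligible_set0].
  apply: (negligibleS (A := [set w | ~ exists2 n, (1 <= n)%N &
     forall i, (i < kappa n)%N -> qball d e j k (cand n i w)])); first by move=> w [].
  have mB : measurable (qball d e j k : set (borelX d)) by exact: omeas.
  have fin : mu (qball d e j k) \is a fin_num.
    by rewrite ge0_fin_numE ?measure_ge0 // (le_lt_trans (probability_le1 _ mB)) ?ltry.
  set rho := fine (mu (qball d e j k)).
  have muB : mu (qball d e j k) = rho%:E by rewrite /rho fineK.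
  have rho0 : 0 < rho by rewrite -lte_fin -muB.
  have rho1 : rho <= 1 by rewrite -lee_fin -muB probability_le1.
  apply: (hit_negl P mu kappa cand Hcand indep (qball d e j k) rho mB muB rho0).
  by apply: Hdiv; rewrite rho0 rho1.
apply: (negligibleS (A := BadA `|` BadB)); last exact: negligibleU.
move=> w /= nG; have [//|nB] := pselect ((BadA `|` BadB) w); exfalso; apply: nG.
apply: (negligibleS (A := N' `|` f_boundary d mu f)); last first.
  by apply: negligibleU => //; exists N'; split.
move=> x Qx; have [//|nx] := pselect ((N' `|` f_boundary d mu f) x); exfalso.
have Aw : forall n i, (1 <= n)%N -> (i < kappa n)%N -> ~ N' (cand n i w).
  by move=> n i n1 ik hN; apply: nB; left; exists n => //; exists i.
have Bw : forall j k, ~ (qball d e j k `<=` N') ->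
    exists2 n, (1 <= n)%N & forall i, (i < kappa n)%N -> qball d e j k (cand n i w).
  move=> j k hs.
  have mpos : (0 < mu (qball d e j k))%E.
    rewrite lt_neqAle measure_ge0 andbT; apply/eqP => /esym h0.
    by apply: hs; apply: subset_trans NN'; exact: (NS (j, k, None)).
  apply: contrapT => hn; apply: nB; right; exists j => //; exists k => //.
have Nx : ~ N' x by move=> h; apply: nx; left.
have Heps : exists2 eps, 0 < eps & forall j k, qball d e j k `<=` oball d x eps ->
      qball d e j k `\` f @^-1` [set f x] `<=` N'.
  have : ~ f_boundary d mu f x by move=> h; apply: nx; right.
  move=> /existsNP[eps] /not_implyP[eps0 hn]; exists eps => // j k bs.
  apply: subset_trans NN'; apply: (NS (j, k, Some (f x))).
  apply/eqP; rewrite eq_le measure_ge0 andbT.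
  apply: (@le_trans _ _ (mu (oball d x eps `\` f @^-1` [set f x]))).
    apply: le_measure.
    - by rewrite inE; exact: (Smeas (j, k, Some (f x))).
    - by rewrite inE; apply: measurableD; [exact: omeas | exact: fm].
    - by move=> z [bz nz]; split => //; exact: bs.
  by rewrite leNgt; apply/negP.
exact: (det d f K kappa _ cand U w e N' dm dense kpos Aw Bw x Nx Heps Qx).
Qed.
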